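(* With $v_1=(1,0,0)$, $v_2=(0,1,0)$, $v_3=(-1,-1,0)$, $v_4=(0,0,1)$, $v_5=(1,1,-1)$, $\Delta=\mathrm{conv}\{v_1,\dots,v_5\}\subset\mathbb R^3$ (a reflexive polytope) and $f(t)=1-a_1t_1-a_2t_2-a_3t_1^{-1}t_2^{-1}-a_4t_3-a_5t_1t_2t_3^{-1}$, the toric residue $$R_{x_1x_2x_4}(a)=-\mathrm{Res}_f\big(t_0^3\,(a_1t_1)(a_2t_2)(a_4t_3)\big)$$ equals $$\frac{a_1^4a_2^4a_3^4a_4^3a_5^3-27a_1^5a_2^5a_3^5a_4^3a_5^3-81a_1^4a_2^4a_3^5a_4^4a_5^4}{E_A(f)},$$ where $E_A(f)$ is the principal $A$-determinant $a_1^4a_2^4a_3^4a_4^3a_5^3-54a_1^5a_2^5a_3^5a_4^3a_5^3-a_1^3a_2^3a_3^4a_4^4a_5^4+729a_1^6a_2^6a_3^6a_4^3a_5^3+54a_1^3a_2^3a_3^5a_4^5a_5^5-2187a_1^5a_2^5a_3^6a_4^4a_5^4+2187a_1^4a_2^4a_3^6a_4^5a_5^5-729a_1^3a_2^3a_3^6a_4^6a_5^6$.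
   Context: Let $M\cong\mathbb Z^d$ and $\Delta\subset M_{\mathbb R}$ a reflexive $d$-dimensional lattice polytope ($0$ interior, polar polytope a lattice polytope). $S_\Delta=\bigoplus_kS^k_\Delta\subset\mathbb C[t_0,t^{\pm1}]$ with $S^k_\Delta$ spanned by $t_0^kt^m$, $m\in k\Delta\cap M$. For a Laurent polynomial $f$ with support in $\Delta$, let $f_i=t_i\partial f/\partial t_i$, $F_0=t_0f$, $F_i=t_0f_i$; $f$ is $\Delta$-regular if $F_0,\dots,F_d$ is a regular sequence in $S_\Delta$. Let $H'_f=t_0^d\det M_f$ where $M_f$ is the $(d+1)\times(d+1)$ matrix with first row $(f,f_1,\dots,f_d)$, first column $(f,f_1,\dots,f_d)^T$ and $(i,j)$ entry $t_i\partial f_j/\partial t_i$ for $1\le i,j\le d$. The toric residue $\mathrm{Res}_f:S^d_\Delta\to\mathbb C$ is the unique linear map vanishing on $\sum_iF_iS^{d-1}_\Delta$ with $\mathrm{Res}_f(H'_f)=\mathrm{Vol}(\Delta)$ ($d!$ times Euclidean volume); as a function of the coefficients of $f$ it is rational. *)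

(* Defs.v *)
From mathcomp Require Import all_boot all_order all_algebra all_fingroup.
Set Implicit Arguments. Unset Strict Implicit. Unset Printing Implicit Defensive.
Import Order.TTheory GRing.Theory Num.Theory.
Local Open Scope ring_scope.

Definition pt := (int * int * int)%type.
Definition ptsub (m n : pt) : pt := (m.1.1 - n.1.1, m.1.2 - n.1.2, m.2 - n.2).

(* vertices v1..v5 (indexed 0..4) *)
Definition vtx (i : 'I_5) : pt :=
  match val i with
  | 0 => (1, 0, 0) | 1 => (0, 1, 0) | 2 => (-1, -1, 0) | 3 => (0, 0, 1)
  | _ => (1, 1, -1) end.

(* m lies in k*Delta = k * conv{v1..v5} (convex combination with rational
   coefficients; Delta is a rational polytope) *)
Definition in_kDelta (k : nat) (m : pt) : Prop :=
  exists lam : 'I_5 -> rat,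
    (forall i, 0 <= lam i) /\ \sum_i lam i = k%:R /\
    \sum_i lam i * ((vtx i).1.1)%:~R = (m.1.1)%:~R /\
    \sum_i lam i * ((vtx i).1.2)%:~R = (m.1.2)%:~R /\
    \sum_i lam i * ((vtx i).2)%:~R = (m.2)%:~R.

(* normalized volume Vol(Delta) = 3! * Euclidean volume; computed by the
   facet decomposition: quadrilateral facet x+y+z=1 (normalized area 2) and
   four unimodular triangles, total 6. *)
Definition VolDelta : nat := 6.

Section LaurentS.
Variable C : numClosedFieldType.

(* A Laurent polynomial in t1,t2,t3, given by its coefficient function.
   An element t0^k * g of S^k_Delta is represented by g with [inS k g]. *)
Definition lpoly := pt -> C.

Definition inS (k : nat) (g : lpoly) : Prop :=
  forall m, g m != 0 -> in_kDelta k m.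

Definition mono (m0 : pt) (c : C) : lpoly := fun m => if m == m0 then c else 0.
Definition lpadd (g h : lpoly) : lpoly := fun m => g m + h m.
Definition lpscale (c : C) (g : lpoly) : lpoly := fun m => c * g m.
Definition lpzero : lpoly := fun _ => 0.

Definition boxsum (n : nat) (F : pt -> C) : C :=
  \sum_(i < (2 * n).+1) \sum_(j < (2 * n).+1) \sum_(l < (2 * n).+1)
     F (i%:Z - n%:Z, j%:Z - n%:Z, l%:Z - n%:Z).

(* product g*h; exact whenever the support of g lies in [-n,n]^3
   (e.g. n = 1 for g of support in Delta, which lies in [-1,1]^3) *)
Definition lpmul (n : nat) (g h : lpoly) : lpoly :=
  fun m => boxsum n (fun m1 => g m1 * h (ptsub m m1)).

(* product of a list of elements of degree 1 *)
Fixpoint lprod (gs : seq lpoly) : lpoly :=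
  if gs is g :: gs' then lpmul 1 g (lprod gs') else mono (0, 0, 0) 1.

(* weights for theta_i = t_i d/dt_i (i = 1,2,3); theta_0 := identity *)
Definition wt (i : 'I_4) (m : pt) : int :=
  match val i with 0 => 1 | 1 => m.1.1 | 2 => m.1.2 | _ => m.2 end.
Definition theta (i : 'I_4) (g : lpoly) : lpoly := fun m => (wt i m)%:~R * g m.

Definition fpoly (a : 'I_5 -> C) : lpoly :=
  fun m => (if m == (0, 0, 0) then 1 else 0)
           - \sum_(i < 5) (if m == vtx i then a i else 0).

(* F_0 = t0 f, F_i = t0 f_i  (t0 = degree bookkeeping) *)
Definition Fi (a : 'I_5 -> C) (i : 'I_4) : lpoly := theta i (fpoly a).

Definition Mf (a : 'I_5 -> C) (i j : 'I_4) : lpoly := theta i (theta j (fpoly a)).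

Definition detlp (M : 'I_4 -> 'I_4 -> lpoly) : lpoly :=
  fun m => \sum_(s : 'S_4) (-1) ^+ s * lprod [seq M i (s i) | i <- enum 'I_4] m.

Definition Hprime (a : 'I_5 -> C) : lpoly := detlp (Mf a).

Definition inIdeal (a : 'I_5 -> C) (j : nat) (n : nat) (g : lpoly) : Prop :=
  if n is n'.+1 then
    exists hs : 'I_4 -> lpoly, (forall i, inS n' (hs i)) /\
      forall m, g m = \sum_(i < 4 | (i < j)%N) lpmul 1 (Fi a i) (hs i) m
  else forall m, g m = 0.

(* F_0,...,F_3 is a regular sequence in the graded ring S_Delta
   (checked on homogeneous elements, which suffices as the F_i are homogeneous;
   properness of the ideal is automatic by the grading) *)
Definition Delta_regular (a : 'I_5 -> C) : Prop :=
  forall (j : 'I_4) (k : nat) (g : lpoly), inS k g ->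
    inIdeal a j k.+1 (lpmul 1 (Fi a j) g) -> inIdeal a j k g.

Definition is_toric_residue (a : 'I_5 -> C) (Res : lpoly -> C) : Prop :=
  [/\ (forall g h, (forall m, g m = h m) -> Res g = Res h),
      (forall (c : C) g h, inS 3 g -> inS 3 h ->
         Res (lpadd (lpscale c g) h) = c * Res g + Res h),
      (forall (i : 'I_4) h, inS 2 h -> Res (lpmul 1 (Fi a i) h) = 0)
    & Res (Hprime a) = VolDelta%:R].

Definition EA (a : 'I_5 -> C) : C :=
  let a1 := a (inord 0) in let a2 := a (inord 1) in let a3 := a (inord 2) in
  let a4 := a (inord 3) in let a5 := a (inord 4) in
  a1^+4*a2^+4*a3^+4*a4^+3*a5^+3 - 54*a1^+5*a2^+5*a3^+5*a4^+3*a5^+3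
  - a1^+3*a2^+3*a3^+4*a4^+4*a5^+4 + 729*a1^+6*a2^+6*a3^+6*a4^+3*a5^+3
  + 54*a1^+3*a2^+3*a3^+5*a4^+5*a5^+5 - 2187*a1^+5*a2^+5*a3^+6*a4^+4*a5^+4
  + 2187*a1^+4*a2^+4*a3^+6*a4^+5*a5^+5 - 729*a1^+3*a2^+3*a3^+6*a4^+6*a5^+6.

Definition Rnum (a : 'I_5 -> C) : C :=
  let a1 := a (inord 0) in let a2 := a (inord 1) in let a3 := a (inord 2) in
  let a4 := a (inord 3) in let a5 := a (inord 4) in
  a1^+4*a2^+4*a3^+4*a4^+3*a5^+3 - 27*a1^+5*a2^+5*a3^+5*a4^+3*a5^+3
  - 81*a1^+4*a2^+4*a3^+5*a4^+4*a5^+4.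

End LaurentS.

(* Submission.v *)
Require Import Defs.
From mathcomp Require Import all_boot all_order all_algebra all_fingroup.
Import GRing.Theory Num.Theory.
Local Open Scope ring_scope.
From mathcomp Require Import ssrZ ring.
From Stdlib Require Import BinInt.
Set Implicit Arguments. Unset Strict Implicit. Unset Printing Implicit Defensive.
Import Order.TTheory GRing.Theory Num.Theory.
Local Open Scope ring_scope.

Definition exps := (nat * nat * nat * nat * nat)%type.
Definition SP := seq (Z * exps).
Definition LS := seq (pt * SP).
Definition e0 : exps := (0,0,0,0,0)%nat.
Definition eadd (e f : exps) : exps :=
  (e.1.1.1.1 + f.1.1.1.1, e.1.1.1.2 + f.1.1.1.2, e.1.1.2 + f.1.1.2,
   e.1.2 + f.1.2, e.2 + f.2)%nat.
Definition mulP (p q : SP) : SP := [seq (Z.mul x.1 y.1, eadd x.2 y.2) | x <- p, y <- q].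
Fixpoint insP (x : Z * exps) (p : SP) : SP :=
  match p with
  | [::] => [:: x]
  | y :: p' => if y.2 == x.2 then (Z.add y.1 x.1, y.2) :: p' else y :: insP x p'
  end.
Definition normP (p : SP) : SP := filter (fun x => x.1 != 0%Z) (foldr insP [::] p).
Definition padd (m n : pt) : pt := (m.1.1 + n.1.1, m.1.2 + n.1.2, m.2 + n.2).
Definition coefAt (L : LS) (q : pt) : SP := flatten [seq x.2 | x <- L & x.1 == q].
Definition mulLS (A B : LS) : LS := [seq (padd y.1 x.1, mulP x.2 y.2) | x <- A, y <- B].
Definition scaleLS (p : SP) (L : LS) : LS := [seq (x.1, mulP p x.2) | x <- L].
Definition zeroLS (L : LS) : bool :=
  all (fun q => normP (coefAt L q) == [::]) (undup (map fst L)).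
Definition suppIn (L : LS) (S : seq pt) : bool :=
  all (fun q => (normP (coefAt L q) == [::]) || (q \in S)) (undup (map fst L)).
Definition wtn (k : nat) (m : pt) : int :=
  match k with 0 => 1 | 1 => m.1.1 | 2 => m.1.2 | _ => m.2 end.
Definition thLS (k : nat) (L : LS) : LS :=
  [seq (x.1, mulP [:: (Z_of_int (wtn k x.1), e0)] x.2) | x <- L].

Section Eval.
Variable C : numClosedFieldType.
Variable a : 'I_5 -> C.

Definition zC (z : Z) : C := (int_of_Z z)%:~R.
Lemma zCD x y : zC (Z.add x y) = zC x + zC y.
Proof. by rewrite /zC -intrD; congr (_%:~R); apply: (rmorphD int_of_Z). Qed.
Lemma zCM x y : zC (Z.mul x y) = zC x * zC y.
Proof. by rewrite /zC -intrM; congr (_%:~R); apply: (rmorphM int_of_Z). Qed.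
Lemma zC0 : zC 0%Z = 0. Proof. by []. Qed.
Lemma zC_int k : zC (Z_of_int k) = k%:~R. Proof. by rewrite /zC Z_of_intK. Qed.

Definition evE (e : exps) : C :=
  a (inord 0) ^+ e.1.1.1.1 * a (inord 1) ^+ e.1.1.1.2 * a (inord 2) ^+ e.1.1.2
  * a (inord 3) ^+ e.1.2 * a (inord 4) ^+ e.2.
Definition evP (p : SP) : C := \sum_(x <- p) zC x.1 * evE x.2.

Lemma evE_add e f : evE (eadd e f) = evE e * evE f.
Proof.
case: e => [[[[e1 e2] e3] e4] e5]; case: f => [[[[f1 f2] f3] f4] f5].
rewrite /evE /eadd /= !exprD; ring.
Qed.
Lemma evE0 : evE e0 = 1. Proof. by rewrite /evE /= !expr0 !mul1r. Qed.

Lemma evP_nil : evP [::] = 0. Proof. by rewrite /evP big_nil. Qed.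
Lemma evP_cons x p : evP (x :: p) = zC x.1 * evE x.2 + evP p.
Proof. by rewrite /evP big_cons. Qed.
Lemma evP_cat p q : evP (p ++ q) = evP p + evP q.
Proof. by rewrite /evP big_cat. Qed.
Lemma evP_flatten (s : seq SP) : evP (flatten s) = \sum_(p <- s) evP p.
Proof. by rewrite /evP big_flatten. Qed.
Lemma evP_mul p q : evP (mulP p q) = evP p * evP q.
Proof.
rewrite /evP /mulP big_allpairs_dep mulr_suml; apply: eq_bigr => x _.
rewrite mulr_sumr; apply: eq_bigr => y _ /=.
rewrite zCM evE_add; ring.
Qed.
Lemma evP_ins x p : evP (insP x p) = zC x.1 * evE x.2 + evP p.
Proof.
elim: p => [|y p IH] /=; first by rewrite evP_cons evP_nil.
case: eqP => [He|_].
  by rewrite !evP_cons /= zCD He; ring.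
by rewrite !evP_cons IH; ring.
Qed.
Lemma evP_norm p : evP (normP p) = evP p.
Proof.
rewrite /normP /evP big_filter.
have -> : \sum_(i <- foldr insP [::] p | i.1 != 0%Z) zC i.1 * evE i.2 =
          \sum_(i <- foldr insP [::] p) zC i.1 * evE i.2.
  rewrite [RHS](bigID (fun i => i.1 != 0%Z)) /=.
  rewrite [X in _ = _ + X]big1 ?addr0 // => i /negPn/eqP ->.
  by rewrite zC0 mul0r.
elim: p => [|x p IH] /=; first by rewrite !big_nil.
by rewrite -[LHS]/(evP _) evP_ins /evP IH big_cons.
Qed.

Definition evLS (L : LS) : lpoly C :=
  fun m => \sum_(x <- L) (if m == x.1 then evP x.2 else 0).

Lemma evLS_coef L m : evLS L m = evP (coefAt L m).
Proof.
rewrite /evLS /coefAt evP_flatten big_map big_filter.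
rewrite [RHS]big_mkcond; apply: eq_bigr => x _; by rewrite eq_sym.
Qed.

Lemma evLS_zero L : zeroLS L -> forall m, evLS L m = 0.
Proof.
move=> /allP H m; rewrite evLS_coef.
case Hm: (m \in undup (map fst L)).
  by rewrite -evP_norm (eqP (H _ Hm)) evP_nil.
rewrite /coefAt.
have -> : [seq x <- L | x.1 == m] = [::].
  have Hn : ~~ has (fun x : pt * SP => x.1 == m) L.
    apply/hasPn => x xL; apply/negP => /eqP Hx.
    by move: Hm; rewrite mem_undup -Hx map_f.
  by move: Hn; rewrite has_filter negbK => /eqP.
by rewrite evP_nil.
Qed.
End Eval.

Definition boxL : seq pt :=
  flatten [seq flatten [seq [seq ((i%:Z - 1%:Z), (j%:Z - 1%:Z), (l%:Z - 1%:Z)) | l <- iota 0 3]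
     | j <- iota 0 3] | i <- iota 0 3].

Lemma padd_sub_eq (m p q : pt) : (ptsub m p == q) = (m == padd q p).
Proof.
case: m p q => [[m1 m2] m3] [[p1 p2] p3] [[q1 q2] q3].
by rewrite /ptsub /padd /= !xpair_eqE !subr_eq.
Qed.

Section Eval2.
Variable C : numClosedFieldType.
Variable a : 'I_5 -> C.
Local Notation evP := (evP a).
Local Notation evLS := (evLS a).

Lemma evLS_supp L S m : suppIn L S -> evLS L m != 0 -> m \in S.
Proof.
move=> /allP H; rewrite evLS_coef.
case Hm: (m \in undup (map fst L)).
  by case/orP: (H _ Hm) => [/eqP h|//]; rewrite -evP_norm h evP_nil eqxx.
rewrite /coefAt.
have -> : [seq x <- L | x.1 == m] = [::].
  have Hn : ~~ has (fun x : pt * SP => x.1 == m) L.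
    apply/hasPn => x xL; apply/negP => /eqP Hx.
    by move: Hm; rewrite mem_undup -Hx map_f.
  by move: Hn; rewrite has_filter negbK => /eqP.
by rewrite evP_nil eqxx.
Qed.

Lemma evLS_cat L1 L2 m : evLS (L1 ++ L2) m = evLS L1 m + evLS L2 m.
Proof. by rewrite /Submission.evLS big_cat. Qed.
Lemma evLS_scale p L m : evLS (scaleLS p L) m = evP p * evLS L m.
Proof.
rewrite /Submission.evLS /scaleLS big_map mulr_sumr; apply: eq_bigr => x _ /=.
by case: ifP; rewrite ?mulr0 // evP_mul.
Qed.
Lemma evLS_seq1 p s m : evLS [:: (p, s)] m = if m == p then evP s else 0.
Proof. by rewrite /Submission.evLS big_seq1. Qed.
Lemma evLS_out L m : m \notin map fst L -> evLS L m = 0.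
Proof.
move=> Hm; rewrite /Submission.evLS big_seq big1 // => x xL; case: eqP => // Ex.
by move: Hm; rewrite Ex map_f.
Qed.

Lemma boxsum1E (F : pt -> C) : boxsum 1 F = \sum_(q <- boxL) F q.
Proof.
rewrite /boxsum /boxL.
rewrite big_flatten big_map.
under eq_bigr => i _ do rewrite big_flatten big_map.
under eq_bigr => i _ do under eq_bigr => j _ do rewrite big_map.
rewrite !big_ord_recl !big_ord0.
rewrite /= !big_cons !big_nil /=.
reflexivity.
Qed.

Lemma lpmul_supp (U : seq pt) (g h : lpoly C) m :
  uniq U -> all (mem boxL) U -> (forall q, q \notin U -> g q = 0) ->
  lpmul 1 g h m = \sum_(q <- U) g q * h (ptsub m q).
Proof.
move=> uU /allP UB gU; rewrite /lpmul boxsum1E.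
rewrite (bigID (mem U)) /= [X in _ + X]big1 ?addr0; last first.
  by move=> q /gU ->; rewrite mul0r.
rewrite -big_filter; apply: perm_big; apply: uniq_perm.
- by apply: filter_uniq; vm_compute.
- exact: uU.
move=> q; rewrite mem_filter; apply/andP/idP => [[]//|qU]; split=> //.
exact: UB.
Qed.

Lemma lpmul_evLS (A : LS) (B : LS) m :
  all (mem boxL) (map fst A) ->
  lpmul 1 (evLS A) (evLS B) m = evLS (mulLS A B) m.
Proof.
move=> AB.
rewrite (@lpmul_supp (undup (map fst A))) ?undup_uniq //; last 2 first.
- by apply/allP => q; rewrite mem_undup => /(allP AB).
- by move=> q; rewrite mem_undup => /evLS_out.
rewrite /Submission.evLS /mulLS big_allpairs_dep /=.
under eq_bigr do rewrite mulr_suml.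
rewrite exchange_big /= [RHS]big_seq [LHS]big_seq; apply: eq_bigr => x xA.
rewrite (bigD1_seq x.1) /= ?undup_uniq ?mem_undup ?(map_f _ xA) // eqxx.
rewrite [X in _ + X]big1 ?addr0; last by move=> q /negbTE ->; rewrite mul0r.
rewrite mulr_sumr; apply: eq_bigr => y _; rewrite padd_sub_eq.
by case: ifP; rewrite ?mulr0 // evP_mul.
Qed.
End Eval2.

Lemma big_ord5 (R : Type) (idx : R) (op : Monoid.law idx) (F : 'I_5 -> R) :
  \big[op/idx]_(i < 5) F i =
  op (F (inord 0)) (op (F (inord 1)) (op (F (inord 2)) (op (F (inord 3)) (op (F (inord 4)) idx)))).
Proof.
rewrite !big_ord_recl big_ord0.
have E0 : (inord 0 : 'I_5) = ord0 by apply/val_inj; rewrite /= inordK.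
have E1 : (inord 1 : 'I_5) = lift ord0 ord0 by apply/val_inj; rewrite /= inordK.
have E2 : (inord 2 : 'I_5) = lift ord0 (lift ord0 ord0) by apply/val_inj; rewrite /= inordK.
have E3 : (inord 3 : 'I_5) = lift ord0 (lift ord0 (lift ord0 ord0)) by apply/val_inj; rewrite /= inordK.
have E4 : (inord 4 : 'I_5) = lift ord0 (lift ord0 (lift ord0 (lift ord0 ord0))) by apply/val_inj; rewrite /= inordK.
by rewrite E0 E1 E2 E3 E4.
Qed.

Lemma big_ord4 (R : Type) (idx : R) (op : Monoid.law idx) (F : 'I_4 -> R) :
  \big[op/idx]_(i < 4) F i =
  op (F (inord 0)) (op (F (inord 1)) (op (F (inord 2)) (op (F (inord 3)) idx))).
Proof.
rewrite !big_ord_recl big_ord0.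
have E0 : (inord 0 : 'I_4) = ord0 by apply/val_inj; rewrite /= inordK.
have E1 : (inord 1 : 'I_4) = lift ord0 ord0 by apply/val_inj; rewrite /= inordK.
have E2 : (inord 2 : 'I_4) = lift ord0 (lift ord0 ord0) by apply/val_inj; rewrite /= inordK.
have E3 : (inord 3 : 'I_4) = lift ord0 (lift ord0 (lift ord0 ord0)) by apply/val_inj; rewrite /= inordK.
by rewrite E0 E1 E2 E3.
Qed.

Lemma val_inord (n k : nat) : (k <= n)%nat -> \val (inord k : 'I_n.+1) = k.
Proof. exact: inordK. Qed.

Lemma enum4 : enum 'I_4 = [:: inord 0; inord 1; inord 2; inord 3].
Proof. by apply: (inj_map val_inj); rewrite val_enum_ord /= !val_inord. Qed.

Lemma vtx0 : vtx (inord 0) = (1, 0, 0). Proof. by rewrite /vtx val_inord. Qed.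
Lemma vtx1 : vtx (inord 1) = (0, 1, 0). Proof. by rewrite /vtx val_inord. Qed.
Lemma vtx2 : vtx (inord 2) = (-1, -1, 0). Proof. by rewrite /vtx val_inord. Qed.
Lemma vtx3 : vtx (inord 3) = (0, 0, 1). Proof. by rewrite /vtx val_inord. Qed.
Lemma vtx4 : vtx (inord 4) = (1, 1, -1). Proof. by rewrite /vtx val_inord. Qed.

Definition fL : LS :=
  [:: ((0, 0, 0), [:: (1%Z, e0)]);
      ((1, 0, 0), [:: ((-1)%Z, (1,0,0,0,0)%nat)]);
      ((0, 1, 0), [:: ((-1)%Z, (0,1,0,0,0)%nat)]);
      ((-1, -1, 0), [:: ((-1)%Z, (0,0,1,0,0)%nat)]);
      ((0, 0, 1), [:: ((-1)%Z, (0,0,0,1,0)%nat)]);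
      ((1, 1, -1), [:: ((-1)%Z, (0,0,0,0,1)%nat)])].

Definition P0 : seq pt := map fst fL.
Definition S2L : seq pt := [seq padd x y | x <- P0, y <- P0].
Definition S3L : seq pt := [seq padd x y | x <- S2L, y <- P0].

Section Eval3.
Variable C : numClosedFieldType.
Variable a : 'I_5 -> C.
Local Notation evP := (evP a).
Local Notation evLS := (evLS a).

Lemma evP1 z e : evP [:: (z, e)] = zC C z * evE a e.
Proof. by rewrite evP_cons evP_nil addr0. Qed.
Lemma zCm1 : zC C (-1)%Z = -1. Proof. by rewrite /zC /=. Qed.
Lemma zC1 : zC C 1%Z = 1. Proof. by rewrite /zC /=. Qed.

Lemma fpoly_ev m : fpoly a m = evLS fL m.
Proof.
rewrite /fpoly /Submission.evLS big_ord5 !big_cons big_nil /= vtx0 vtx1 vtx2 vtx3 vtx4.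
rewrite !evP1 zCm1 zC1 /evE /= !expr0 !expr1 !mul1r !mulr1.
case: (m == (0,0,0)); case: (m == (1,0,0)); case: (m == (0,1,0));
case: (m == (-1,-1,0)); case: (m == (0,0,1)); case: (m == (1,1,-1)); ring.
Qed.

Lemma theta_ev k L m : (k < 4)%nat -> theta (inord k) (evLS L) m = evLS (thLS k L) m.
Proof.
move=> Hk; rewrite /theta /Submission.evLS /thLS big_map mulr_sumr; apply: eq_bigr => x _ /=.
case: eqP => [->|_]; rewrite ?mulr0 //.
rewrite evP_mul evP1 zC_int evE0 mulr1.
by rewrite /wt val_inord.
Qed.

Lemma Fi_ev k m : (k < 4)%nat -> Fi a (inord k) m = evLS (thLS k fL) m.
Proof.
move=> Hk; rewrite -theta_ev // /Fi /theta.
by rewrite fpoly_ev.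
Qed.

End Eval3.

Lemma inkD_add j k x y : in_kDelta j x -> in_kDelta k y -> in_kDelta (j + k) (padd x y).
Proof.
move=> [l1 [h1 [s1 [c1 [c2 c3]]]]] [l2 [h1' [s1' [c1' [c2' c3']]]]].
exists (fun i => l1 i + l2 i); split; first by move=> i; rewrite addr_ge0.
split; first by rewrite big_split /= s1 s1' natrD.
rewrite /padd /=.
split; first by rewrite -[RHS]/((x.1.1 + y.1.1)%:~R) intrD -c1 -c1' -big_split; apply: eq_bigr => i _; rewrite mulrDl.
split; first by rewrite -[RHS]/((x.1.2 + y.1.2)%:~R) intrD -c2 -c2' -big_split; apply: eq_bigr => i _; rewrite mulrDl.
by rewrite -[RHS]/((x.2 + y.2)%:~R) intrD -c3 -c3' -big_split; apply: eq_bigr => i _; rewrite mulrDl.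
Qed.

Lemma inkD_vtx k : (k < 5)%nat -> in_kDelta 1 (vtx (inord k)).
Proof.
move=> Hk; exists (fun i => if i == inord k then 1 else 0); split.
  by move=> i; case: ifP.
have H (f : 'I_5 -> rat) : \sum_i (if i == inord k then 1 else 0) * f i = f (inord k).
  rewrite (eq_bigr (fun i => if i == inord k then f i else 0)); last first.
    by move=> i _; case: ifP; rewrite ?mul1r ?mul0r.
  by rewrite -big_mkcond big_pred1_eq.
split.
  transitivity (\sum_(i < 5) (if i == inord k then 1 else 0) * (fun _ => (1:rat)) i).
    by apply: eq_bigr => i _; rewrite mulr1.
  by rewrite H.
by rewrite !H.
Qed.

Lemma inkD_0 : in_kDelta 1 (0, 0, 0).
Proof.
exists (fun i : 'I_5 => if (val i < 3)%nat then 1/3 else 0); split.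
  by move=> i; case: ifP.
rewrite !big_ord5 vtx0 vtx1 vtx2 vtx3 vtx4 !val_inord //=.
Qed.

Lemma inkD_P0 p : p \in P0 -> in_kDelta 1 p.
Proof.
rewrite /P0 /fL /= !inE => /or4P [/eqP->|/eqP->|/eqP->|/or3P [/eqP->|/eqP->|/eqP->]].
- exact: inkD_0.
- by rewrite -vtx0; apply: inkD_vtx.
- by rewrite -vtx1; apply: inkD_vtx.
- by rewrite -vtx2; apply: inkD_vtx.
- by rewrite -vtx3; apply: inkD_vtx.
- by rewrite -vtx4; apply: inkD_vtx.
Qed.

Lemma inkD_S2 p : p \in S2L -> in_kDelta 2 p.
Proof.
by case/allpairsP => [[x y] /= [xP yP ->]]; apply: (inkD_add (j:=1) (k:=1)); apply: inkD_P0.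
Qed.

Lemma inkD_S3 p : p \in S3L -> in_kDelta 3 p.
Proof.
case/allpairsP => [[x y] /= [xP yP ->]]; apply: (inkD_add (j:=2) (k:=1)).
  exact: inkD_S2.
exact: inkD_P0.
Qed.

Section Eval4.
Variable C : numClosedFieldType.
Variable a : 'I_5 -> C.
Local Notation evP := (evP a).
Local Notation evLS := (evLS a).

Lemma inS_ev2 L : suppIn L S2L -> inS 2 (evLS L).
Proof. by move=> H m /(evLS_supp H) /inkD_S2. Qed.
Lemma inS_ev3 L : suppIn L S3L -> inS 3 (evLS L).
Proof. by move=> H m /(evLS_supp H) /inkD_S3. Qed.
Lemma inS_ext k (g h : lpoly C) : (forall m, g m = h m) -> inS k h -> inS k g.
Proof. by move=> E H m; rewrite E; apply: H. Qed.
Lemma inS_add k (g h : lpoly C) : inS k g -> inS k h -> inS k (lpadd g h).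
Proof.
move=> Hg Hh m; rewrite /lpadd; case: (eqVneq (g m) 0) => [->|/Hg //].
by rewrite add0r => /Hh.
Qed.
Lemma inS_scale k c (g : lpoly C) : inS k g -> inS k (lpscale c g).
Proof. by move=> Hg m; rewrite /lpscale; case: (eqVneq (g m) 0) => [->|/Hg //]; rewrite mulr0 eqxx. Qed.
Lemma inS_zero k : inS k (lpzero C).
Proof. by move=> m; rewrite /lpzero eqxx. Qed.
End Eval4.

Fixpoint detF (R : comNzRingType) (n : nat) (A : nat -> nat -> R) {struct n} : R :=
  match n with
  | 0 => 1
  | n'.+1 => foldr (fun j acc => (-1) ^+ j * A 0%nat j * detF n' (fun i k => A i.+1 (bump j k)) + acc)
               0 (iota 0 n'.+1)
  end.

Lemma foldr_ord (R : nmodType) n (G : nat -> R) :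
  foldr (fun j acc => G j + acc) 0 (iota 0 n) = \sum_(j < n) G j.
Proof.
have -> : foldr (fun j acc => G j + acc) 0 (iota 0 n) = \sum_(j <- iota 0 n) G j.
  by elim: (iota 0 n) => [|x s IH] /=; rewrite ?big_nil ?big_cons ?IH.
by rewrite -(big_mkord xpredT G) /index_iota subn0.
Qed.

Lemma detF_S (R : comNzRingType) n (A : nat -> nat -> R) :
  detF n.+1 A = \sum_(j < n.+1) (-1) ^+ j * A 0%nat j * detF n (fun i k => A i.+1 (bump j k)).
Proof. by rewrite -(foldr_ord _ (fun j => (-1) ^+ j * A 0%nat j * detF n (fun i k => A i.+1 (bump j k)))). Qed.

Lemma detF_correct (R : comNzRingType) n (A : nat -> nat -> R) :
  \det (\matrix_(i < n, j < n) A i j) = detF n A.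
Proof.
elim: n A => [|n IH] A; first by rewrite det_mx00.
rewrite (expand_det_row _ ord0) detF_S; apply: eq_bigr => j _.
rewrite mxE /cofactor /= add0n.
rewrite -IH mulrCA mulrA; congr (_ * _).
by congr (\det _); apply/matrixP => i k; rewrite !mxE.
Qed.

Lemma intr_sign (R : nzRingType) j : (((-1) ^+ j : int)%:~R : R) = (-1) ^+ j.
Proof. by elim: j => [|j IH]; rewrite ?expr0 // !exprS intrM IH. Qed.

Lemma detF_intr (R : comNzRingType) n (A : nat -> nat -> int) :
  detF n (fun i j => (A i j)%:~R : R) = (detF n A)%:~R.
Proof.
elim: n A => [|n IH] A //.
rewrite !detF_S rmorph_sum; apply: eq_bigr => j _.
by rewrite !rmorphM /= intr_sign IH.
Qed.

Definition sum4 (q : pt * pt * pt * pt) : pt :=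
  padd (padd (padd (padd (0,0,0) q.2) q.1.2) q.1.1.2) q.1.1.1.
Definition U2 := [seq (x, y) | x <- P0, y <- P0].
Definition U3 := [seq (x, y) | x <- U2, y <- P0].
Definition U4 := [seq (x, y) | x <- U3, y <- P0].
Definition qs (q : pt * pt * pt * pt) : seq pt := [:: q.1.1.1; q.1.1.2; q.1.2; q.2].
Definition Wn (q : pt * pt * pt * pt) (i j : nat) : int := wtn j (nth (0,0,0) (qs q) i).
Definition coefH (q : pt * pt * pt * pt) : SP :=
  mulP [:: (Z_of_int (wtn 0 q.1.1.1 * (wtn 1 q.1.1.2 * (wtn 2 q.1.2 * (wtn 3 q.2 * detF 4 (Wn q))))), e0)]
   (mulP (coefAt fL q.1.1.1) (mulP (coefAt fL q.1.1.2) (mulP (coefAt fL q.1.2) (coefAt fL q.2)))).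
Definition HS : LS := [seq (sum4 q, coefH q) | q <- U4].

Lemma P0_uniq : uniq P0. Proof. by vm_compute. Qed.
Lemma P0_box : all (mem boxL) P0. Proof. by vm_compute. Qed.

Section Eval5.
Variable C : numClosedFieldType.
Variable a : 'I_5 -> C.
Local Notation evP := (evP a).
Local Notation evLS := (evLS a).

Lemma lprod4 (g0 g1 g2 g3 : lpoly C) m :
  (forall q, q \notin P0 -> g0 q = 0) -> (forall q, q \notin P0 -> g1 q = 0) ->
  (forall q, q \notin P0 -> g2 q = 0) -> (forall q, q \notin P0 -> g3 q = 0) ->
  lprod [:: g0; g1; g2; g3] m =
  \sum_(q <- U4) (if m == sum4 q then 1 else 0) * (g0 q.1.1.1 * (g1 q.1.1.2 * (g2 q.1.2 * g3 q.2))).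
Proof.
move=> H0 H1 H2 H3.
have L g h m' := @lpmul_supp C P0 g h m' P0_uniq P0_box.
cbn [lprod].
rewrite (L _ _ _ H0).
under eq_bigr => q0 _ do rewrite (L _ _ _ H1).
under eq_bigr => q0 _ do under eq_bigr => q1 _ do rewrite (L _ _ _ H2).
under eq_bigr => q0 _ do under eq_bigr => q1 _ do under eq_bigr => q2 _ do rewrite (L _ _ _ H3).
rewrite /U4 big_allpairs /U3 big_allpairs /U2 big_allpairs.
apply: eq_bigr => q0 _; rewrite mulr_sumr; apply: eq_bigr => q1 _.
rewrite !mulr_sumr; apply: eq_bigr => q2 _.
rewrite !mulr_sumr; apply: eq_bigr => q3 _.
rewrite /mono /sum4 /= !padd_sub_eq.
by case: ifP => _; rewrite ?mulr1 ?mulr0 ?mul1r ?mul0r.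
Qed.
End Eval5.

Lemma prod_ord4 (R : comNzRingType) (F : 'I_4 -> R) :
  \prod_(i < 4) F i = F (inord 0) * (F (inord 1) * (F (inord 2) * (F (inord 3) * 1))).
Proof. exact: big_ord4. Qed.

Section Eval6.
Variable C : numClosedFieldType.
Variable a : 'I_5 -> C.
Local Notation evP := (evP a).
Local Notation evLS := (evLS a).

Lemma fpoly_out q : q \notin P0 -> fpoly a q = 0.
Proof. by move=> H; rewrite fpoly_ev evLS_out. Qed.

Lemma Mf_out i j q : q \notin P0 -> Mf a i j q = 0.
Proof. by move=> H; rewrite /Mf /theta fpoly_out // !mulr0. Qed.

Definition qq (q : pt * pt * pt * pt) (i : 'I_4) : pt := nth (0,0,0) (qs q) i.

Lemma det_Mf q :
  \det (\matrix_(i, j) Mf a i j (qq q i)) =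
  (\prod_(i < 4) ((wt i (qq q i))%:~R * fpoly a (qq q i))) * (detF 4 (Wn q))%:~R.
Proof.
have -> : \matrix_(i, j) Mf a i j (qq q i) =
   diag_mx (\row_i ((wt i (qq q i))%:~R * fpoly a (qq q i))) *m
   \matrix_(i < 4, j < 4) ((Wn q i j)%:~R : C).
  rewrite mul_diag_mx; apply/matrixP => i j; rewrite !mxE /Mf /theta.
  rewrite /Wn /wt /qq; ring.
rewrite det_mulmx det_diag (@detF_correct C 4 (fun i j => (Wn q i j)%:~R)) (@detF_intr C 4 (Wn q)).
congr (_ * _).
by apply: eq_bigr => i _; rewrite mxE.
Qed.

Lemma Hprime_ev m : Hprime a m = evLS HS m.
Proof.
rewrite /Hprime /detlp enum4.
under eq_bigr => s _ do rewrite (lprod4 _ (Mf_out _ _) (Mf_out _ _) (Mf_out _ _) (Mf_out _ _)).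
under eq_bigr do rewrite mulr_sumr.
rewrite exchange_big /Submission.evLS /HS big_map /=; apply: eq_bigr => q _.
under eq_bigr do rewrite mulrCA.
rewrite -mulr_sumr; case: ifP => _; rewrite ?mul0r // mul1r.
have -> : \sum_(s : 'S_4) (-1) ^+ s * (Mf a (inord 0) (s (inord 0)) q.1.1.1 *
      (Mf a (inord 1) (s (inord 1)) q.1.1.2 *
       (Mf a (inord 2) (s (inord 2)) q.1.2 * Mf a (inord 3) (s (inord 3)) q.2)))
   = \det (\matrix_(i, j) Mf a i j (qq q i)).
  rewrite /determinant; apply: eq_bigr => s _; congr (_ * _).
  rewrite prod_ord4 !mxE /qq !inordK //= mulr1.
  done.
rewrite det_Mf prod_ord4 /qq !inordK // mulr1.
cbn [nth qs].
rewrite /coefH !evP_mul evP1 zC_int evE0 mulr1 -!evLS_coef -!fpoly_ev.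
rewrite !intrM /wt !val_inord //.
ring.
Qed.
End Eval6.

Definition hL0 : LS := [:: (((-2),(-2),0), [:: (10%Z, (1,1,2,1,2)%nat); ((-486)%Z, (1,1,3,2,3)%nat); (2916%Z, (1,1,4,3,4)%nat); ((-594)%Z, (2,2,3,1,2)%nat); ((-5832)%Z, (2,2,4,2,3)%nat); (2916%Z, (3,3,4,1,2)%nat)]);
  (((-1),(-1),0), [:: ((-6)%Z, (1,1,1,1,2)%nat); (324%Z, (1,1,2,2,3)%nat); ((-3402)%Z, (1,1,3,3,4)%nat); (1%Z, (2,2,1,0,1)%nat); (243%Z, (2,2,2,1,2)%nat); (6804%Z, (2,2,3,2,3)%nat); ((-27)%Z, (3,3,2,0,1)%nat); ((-3402)%Z, (3,3,3,1,2)%nat)]);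
  (((-1),(-1),1), [:: ((-10)%Z, (1,1,1,2,2)%nat); (540%Z, (1,1,2,3,3)%nat); ((-4374)%Z, (1,1,3,4,4)%nat); (6%Z, (2,2,1,1,1)%nat); (162%Z, (2,2,2,2,2)%nat); (11664%Z, (2,2,3,3,3)%nat); ((-1)%Z, (3,3,1,0,0)%nat); ((-189)%Z, (3,3,2,1,1)%nat); ((-10206)%Z, (3,3,3,2,2)%nat); (27%Z, (4,4,2,0,0)%nat); (2916%Z, (4,4,3,1,1)%nat)]);
  ((0,(-1),0), [:: ((-16)%Z, (2,1,1,1,2)%nat); (810%Z, (2,1,2,2,3)%nat); ((-4374)%Z, (2,1,3,3,4)%nat); (1%Z, (3,2,1,0,1)%nat); (837%Z, (3,2,2,1,2)%nat); (8748%Z, (3,2,3,2,3)%nat); ((-27)%Z, (4,3,2,0,1)%nat); ((-4374)%Z, (4,3,3,1,2)%nat)]);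
  ((0,0,0), [:: (6%Z, (1,1,1,2,3)%nat); ((-162)%Z, (1,1,2,3,4)%nat); ((-6)%Z, (2,2,1,1,2)%nat); ((-324)%Z, (2,2,2,2,3)%nat); (486%Z, (3,3,2,1,2)%nat)]);
  ((0,0,1), [:: (6%Z, (1,1,0,2,2)%nat); ((-306)%Z, (1,1,1,3,3)%nat); (2916%Z, (1,1,2,4,4)%nat); ((-1)%Z, (2,2,0,1,1)%nat); ((-279)%Z, (2,2,1,2,2)%nat); ((-6318)%Z, (2,2,2,3,3)%nat); (45%Z, (3,3,1,1,1)%nat); (3888%Z, (3,3,2,2,2)%nat); ((-486)%Z, (4,4,2,1,1)%nat)]);
  ((1,0,0), [:: (6%Z, (2,1,0,1,2)%nat); ((-324)%Z, (2,1,1,2,3)%nat); (4374%Z, (2,1,2,3,4)%nat); ((-1)%Z, (3,2,0,0,1)%nat); ((-243)%Z, (3,2,1,1,2)%nat); ((-8748)%Z, (3,2,2,2,3)%nat); (27%Z, (4,3,1,0,1)%nat); (4374%Z, (4,3,2,1,2)%nat)]);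
  ((1,0,1), [:: (6%Z, (2,1,0,2,2)%nat); ((-324)%Z, (2,1,1,3,3)%nat); (4374%Z, (2,1,2,4,4)%nat); ((-7)%Z, (3,2,0,1,1)%nat); (81%Z, (3,2,1,2,2)%nat); ((-13122)%Z, (3,2,2,3,3)%nat); (1%Z, (4,3,0,0,0)%nat); (270%Z, (4,3,1,1,1)%nat); (13122%Z, (4,3,2,2,2)%nat); ((-27)%Z, (5,4,1,0,0)%nat); ((-4374)%Z, (5,4,2,1,1)%nat)]);
  ((1,1,0), [:: ((-1)%Z, (2,2,0,1,2)%nat); (81%Z, (2,2,1,2,3)%nat); (1%Z, (3,3,0,0,1)%nat); ((-54)%Z, (3,3,1,1,2)%nat); ((-27)%Z, (4,4,1,0,1)%nat)]);
  ((2,0,0), [:: (1%Z, (3,1,0,1,2)%nat); ((-81)%Z, (3,1,1,2,3)%nat); ((-1)%Z, (4,2,0,0,1)%nat); (54%Z, (4,2,1,1,2)%nat); (27%Z, (5,3,1,0,1)%nat)])].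

Definition hL1 : LS := [:: (((-2),(-2),0), [:: (21%Z, (1,1,2,1,2)%nat); ((-1053)%Z, (1,1,3,2,3)%nat); (5832%Z, (1,1,4,3,4)%nat); ((-1)%Z, (2,2,2,0,1)%nat); ((-1134)%Z, (2,2,3,1,2)%nat); ((-11664)%Z, (2,2,4,2,3)%nat); (27%Z, (3,3,3,0,1)%nat); (5832%Z, (3,3,4,1,2)%nat)]);
  (((-1),(-1),0), [:: ((-22)%Z, (1,1,1,1,2)%nat); (1134%Z, (1,1,2,2,3)%nat); ((-9720)%Z, (1,1,3,3,4)%nat); (2%Z, (2,2,1,0,1)%nat); (1080%Z, (2,2,2,1,2)%nat); (19440%Z, (2,2,3,2,3)%nat); ((-54)%Z, (3,3,2,0,1)%nat); ((-9720)%Z, (3,3,3,1,2)%nat)]);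
  (((-1),(-1),1), [:: (12%Z, (1,1,1,2,2)%nat); ((-540)%Z, (1,1,2,3,3)%nat); (9%Z, (2,2,1,1,1)%nat); ((-1269)%Z, (2,2,2,2,2)%nat); (5832%Z, (2,2,3,3,3)%nat); ((-1)%Z, (3,3,1,0,0)%nat); ((-378)%Z, (3,3,2,1,1)%nat); ((-11664)%Z, (3,3,3,2,2)%nat); (27%Z, (4,4,2,0,0)%nat); (5832%Z, (4,4,3,1,1)%nat)]);
  (((-1),0,0), [:: ((-1)%Z, (1,2,1,1,2)%nat); (81%Z, (1,2,2,2,3)%nat); (1%Z, (2,3,1,0,1)%nat); ((-54)%Z, (2,3,2,1,2)%nat); ((-27)%Z, (3,4,2,0,1)%nat)]);
  ((0,(-1),0), [:: (14%Z, (2,1,1,1,2)%nat); ((-648)%Z, (2,1,2,2,3)%nat); (4374%Z, (2,1,3,3,4)%nat); (1%Z, (3,2,1,0,1)%nat); ((-945)%Z, (3,2,2,1,2)%nat); ((-8748)%Z, (3,2,3,2,3)%nat); ((-27)%Z, (4,3,2,0,1)%nat); (4374%Z, (4,3,3,1,2)%nat)]);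
  ((0,0,0), [:: (6%Z, (1,1,0,1,2)%nat); ((-321)%Z, (1,1,1,2,3)%nat); (3807%Z, (1,1,2,3,4)%nat); ((-1)%Z, (2,2,0,0,1)%nat); ((-246)%Z, (2,2,1,1,2)%nat); ((-7938)%Z, (2,2,2,2,3)%nat); (27%Z, (3,3,1,0,1)%nat); (4131%Z, (3,3,2,1,2)%nat)]);
  ((0,0,1), [:: ((-6)%Z, (1,1,0,2,2)%nat); (306%Z, (1,1,1,3,3)%nat); ((-2916)%Z, (1,1,2,4,4)%nat); ((-5)%Z, (2,2,0,1,1)%nat); (603%Z, (2,2,1,2,2)%nat); (1944%Z, (2,2,2,3,3)%nat); (1%Z, (3,3,0,0,0)%nat); (198%Z, (3,3,1,1,1)%nat); (4860%Z, (3,3,2,2,2)%nat); ((-27)%Z, (4,4,1,0,0)%nat); ((-3888)%Z, (4,4,2,1,1)%nat)]);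
  ((0,0,2), [:: ((-6)%Z, (1,1,0,3,2)%nat); (324%Z, (1,1,1,4,3)%nat); ((-4374)%Z, (1,1,2,5,4)%nat); (7%Z, (2,2,0,2,1)%nat); ((-81)%Z, (2,2,1,3,2)%nat); (13122%Z, (2,2,2,4,3)%nat); ((-1)%Z, (3,3,0,1,0)%nat); ((-270)%Z, (3,3,1,2,1)%nat); ((-13122)%Z, (3,3,2,3,2)%nat); (27%Z, (4,4,1,1,0)%nat); (4374%Z, (4,4,2,2,1)%nat)]);
  ((0,1,1), [:: ((-1)%Z, (1,2,0,2,2)%nat); (81%Z, (1,2,1,3,3)%nat); (2%Z, (2,3,0,1,1)%nat); ((-135)%Z, (2,3,1,2,2)%nat); ((-1)%Z, (3,4,0,0,0)%nat); (27%Z, (3,4,1,1,1)%nat); (27%Z, (4,5,1,0,0)%nat)]);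
  ((1,0,0), [:: ((-5)%Z, (2,1,0,1,2)%nat); (243%Z, (2,1,1,2,3)%nat); ((-4374)%Z, (2,1,2,3,4)%nat); (297%Z, (3,2,1,1,2)%nat); (8748%Z, (3,2,2,2,3)%nat); ((-4374)%Z, (4,3,2,1,2)%nat)]);
  ((1,0,1), [:: ((-7)%Z, (2,1,0,2,2)%nat); (405%Z, (2,1,1,3,3)%nat); ((-4374)%Z, (2,1,2,4,4)%nat); (8%Z, (3,2,0,1,1)%nat); ((-135)%Z, (3,2,1,2,2)%nat); (13122%Z, (3,2,2,3,3)%nat); ((-1)%Z, (4,3,0,0,0)%nat); ((-297)%Z, (4,3,1,1,1)%nat); ((-13122)%Z, (4,3,2,2,2)%nat); (27%Z, (5,4,1,0,0)%nat); (4374%Z, (5,4,2,1,1)%nat)]);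
  ((2,0,0), [:: ((-1)%Z, (3,1,0,1,2)%nat); (81%Z, (3,1,1,2,3)%nat); (1%Z, (4,2,0,0,1)%nat); ((-54)%Z, (4,2,1,1,2)%nat); ((-27)%Z, (5,3,1,0,1)%nat)])].

Definition hL2 : LS := [:: (((-2),(-2),0), [:: ((-11)%Z, (1,1,2,1,2)%nat); (567%Z, (1,1,3,2,3)%nat); ((-2916)%Z, (1,1,4,3,4)%nat); (1%Z, (2,2,2,0,1)%nat); (540%Z, (2,2,3,1,2)%nat); (5832%Z, (2,2,4,2,3)%nat); ((-27)%Z, (3,3,3,0,1)%nat); ((-2916)%Z, (3,3,4,1,2)%nat)]);
  (((-1),(-1),0), [:: (6%Z, (1,1,1,1,2)%nat); ((-324)%Z, (1,1,2,2,3)%nat); (3402%Z, (1,1,3,3,4)%nat); ((-1)%Z, (2,2,1,0,1)%nat); ((-243)%Z, (2,2,2,1,2)%nat); ((-6804)%Z, (2,2,3,2,3)%nat); (27%Z, (3,3,2,0,1)%nat); (3402%Z, (3,3,3,1,2)%nat)]);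
  (((-1),(-1),1), [:: (8%Z, (1,1,1,2,2)%nat); ((-378)%Z, (1,1,2,3,3)%nat); (4374%Z, (1,1,3,4,4)%nat); ((-3)%Z, (2,2,1,1,1)%nat); ((-351)%Z, (2,2,2,2,2)%nat); ((-11664)%Z, (2,2,3,3,3)%nat); (189%Z, (3,3,2,1,1)%nat); (10206%Z, (3,3,3,2,2)%nat); ((-2916)%Z, (4,4,3,1,1)%nat)]);
  ((0,(-1),0), [:: (1%Z, (2,1,1,1,2)%nat); ((-81)%Z, (2,1,2,2,3)%nat); ((-1)%Z, (3,2,1,0,1)%nat); (54%Z, (3,2,2,1,2)%nat); (27%Z, (4,3,2,0,1)%nat)]);
  ((0,0,0), [:: (3%Z, (1,1,1,2,3)%nat); ((-567)%Z, (1,1,2,3,4)%nat); ((-3)%Z, (2,2,1,1,2)%nat); (810%Z, (2,2,2,2,3)%nat); ((-243)%Z, (3,3,2,1,2)%nat)]);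
  ((0,0,1), [:: ((-6)%Z, (1,1,0,2,2)%nat); (306%Z, (1,1,1,3,3)%nat); ((-2916)%Z, (1,1,2,4,4)%nat); (1%Z, (2,2,0,1,1)%nat); (279%Z, (2,2,1,2,2)%nat); (6318%Z, (2,2,2,3,3)%nat); ((-45)%Z, (3,3,1,1,1)%nat); ((-3888)%Z, (3,3,2,2,2)%nat); (486%Z, (4,4,2,1,1)%nat)]);
  ((1,0,0), [:: ((-1)%Z, (2,1,0,1,2)%nat); (81%Z, (2,1,1,2,3)%nat); (1%Z, (3,2,0,0,1)%nat); ((-54)%Z, (3,2,1,1,2)%nat); ((-27)%Z, (4,3,1,0,1)%nat)])].

Definition hL3 : LS := [:: (((-2),(-2),0), [:: (20%Z, (1,1,2,1,2)%nat); ((-972)%Z, (1,1,3,2,3)%nat); (5832%Z, (1,1,4,3,4)%nat); ((-1188)%Z, (2,2,3,1,2)%nat); ((-11664)%Z, (2,2,4,2,3)%nat); (5832%Z, (3,3,4,1,2)%nat)]);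
  (((-1),(-1),0), [:: ((-22)%Z, (1,1,1,1,2)%nat); (1134%Z, (1,1,2,2,3)%nat); ((-9720)%Z, (1,1,3,3,4)%nat); (2%Z, (2,2,1,0,1)%nat); (1080%Z, (2,2,2,1,2)%nat); (19440%Z, (2,2,3,2,3)%nat); ((-54)%Z, (3,3,2,0,1)%nat); ((-9720)%Z, (3,3,3,1,2)%nat)]);
  (((-1),(-1),1), [:: (4%Z, (1,1,1,2,2)%nat); ((-216)%Z, (1,1,2,3,3)%nat); (1%Z, (2,2,1,1,1)%nat); ((-243)%Z, (2,2,2,2,2)%nat); (1458%Z, (2,2,3,3,3)%nat); ((-81)%Z, (3,3,2,1,1)%nat); ((-2916)%Z, (3,3,3,2,2)%nat); (1458%Z, (4,4,3,1,1)%nat)]);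
  ((0,0,0), [:: (6%Z, (1,1,0,1,2)%nat); ((-312)%Z, (1,1,1,2,3)%nat); (3078%Z, (1,1,2,3,4)%nat); ((-1)%Z, (2,2,0,0,1)%nat); ((-264)%Z, (2,2,1,1,2)%nat); ((-6723)%Z, (2,2,2,2,3)%nat); (36%Z, (3,3,1,0,1)%nat); (3888%Z, (3,3,2,1,2)%nat); ((-243)%Z, (4,4,2,0,1)%nat)]);
  ((0,0,1), [:: ((-6)%Z, (1,1,0,2,2)%nat); (306%Z, (1,1,1,3,3)%nat); ((-2916)%Z, (1,1,2,4,4)%nat); (1%Z, (2,2,0,1,1)%nat); (279%Z, (2,2,1,2,2)%nat); (6318%Z, (2,2,2,3,3)%nat); ((-45)%Z, (3,3,1,1,1)%nat); ((-3888)%Z, (3,3,2,2,2)%nat); (486%Z, (4,4,2,1,1)%nat)])].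

Definition A5S : SP := [:: (1%Z, (0,0,0,0,1)%nat)].
Definition DIFS : SP := [:: (1%Z, (1,1,0,0,0)%nat); ((-1)%Z, (0,0,0,1,1)%nat)].
Definition QFS : SP := [:: (1%Z, e0); ((-54)%Z, (1,1,1,0,0)%nat); ((-54)%Z, (0,0,1,1,1)%nat);
  (729%Z, (2,2,2,0,0)%nat); ((-1458)%Z, (1,1,2,1,1)%nat); (729%Z, (0,0,2,2,2)%nat)].
Definition NFS : SP := [:: (1%Z, e0); ((-27)%Z, (1,1,1,0,0)%nat); ((-81)%Z, (0,0,1,1,1)%nat)].
Definition DpS : SP := mulP [:: (6%Z, e0)] (mulP A5S (mulP DIFS (mulP DIFS QFS))).
Definition cDS : SP := mulP [:: ((-1)%Z, e0)] (mulP DIFS (mulP [:: (1%Z, (1,1,0,0,1)%nat)] NFS)).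
Definition GL0 := mulLS (thLS 0 fL) hL0.
Definition GL1 := mulLS (thLS 1 fL) hL1.
Definition GL2 := mulLS (thLS 2 fL) hL2.
Definition GL3 := mulLS (thLS 3 fL) hL3.
Definition Tot : LS :=
  [:: ((1, 1, 1), mulP DpS [:: (1%Z, (1,1,0,1,0)%nat)])] ++
  scaleLS (mulP [:: ((-1)%Z, e0)] cDS) HS ++
  scaleLS [:: ((-1)%Z, e0)] (GL0 ++ GL1 ++ GL2 ++ GL3).

Lemma Tot_ok : zeroLS Tot. Proof. Time vm_compute. reflexivity. Qed.
Lemma HS_supp : suppIn HS S3L. Proof. Time vm_compute. reflexivity. Qed.

Lemma hL0_supp : suppIn hL0 S2L. Proof. by vm_compute. Qed.
Lemma hL1_supp : suppIn hL1 S2L. Proof. by vm_compute. Qed.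
Lemma hL2_supp : suppIn hL2 S2L. Proof. by vm_compute. Qed.
Lemma hL3_supp : suppIn hL3 S2L. Proof. by vm_compute. Qed.
Lemma GL0_supp : suppIn GL0 S3L. Proof. by vm_compute. Qed.
Lemma GL1_supp : suppIn GL1 S3L. Proof. by vm_compute. Qed.
Lemma GL2_supp : suppIn GL2 S3L. Proof. by vm_compute. Qed.
Lemma GL3_supp : suppIn GL3 S3L. Proof. by vm_compute. Qed.
Lemma FL_box k : all (mem boxL) (map fst (thLS k fL)). Proof. by []. Qed.
Lemma p111_S3 : (1, 1, 1) \in S3L. Proof. by vm_compute. Qed.

Section Main.
Variable C : numClosedFieldType.
Variable a : 'I_5 -> C.
Local Notation evP := (evP a).
Local Notation evLS := (evLS a).

Lemma lpmul_ext (g g' h : lpoly C) m : (forall q, g q = g' q) -> lpmul 1 g h m = lpmul 1 g' h m.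
Proof.
move=> E; rewrite /lpmul /boxsum; apply: eq_bigr => i _; apply: eq_bigr => j _.
by apply: eq_bigr => l _; rewrite E.
Qed.

Lemma G_ev k hL m : (k < 4)%nat ->
  lpmul 1 (Fi a (inord k)) (evLS hL) m = evLS (mulLS (thLS k fL) hL) m.
Proof.
move=> Hk; rewrite (@lpmul_ext _ (evLS (thLS k fL))); last by move=> q; rewrite Fi_ev.
by rewrite lpmul_evLS.
Qed.

Lemma DpE : evP DpS = 6 * a (inord 4) * (a (inord 0) * a (inord 1) - a (inord 3) * a (inord 4)) ^+ 2 *
  (1 - 54 * a (inord 2) * (a (inord 0) * a (inord 1) + a (inord 3) * a (inord 4))
   + 729 * a (inord 2) ^+ 2 * (a (inord 0) * a (inord 1) - a (inord 3) * a (inord 4)) ^+ 2).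
Proof.
rewrite /DpS !evP_mul /A5S /DIFS /QFS !evP_cons !evP_nil /zC.
vm_compute int_of_Z. rewrite /evE /=. ring.
Qed.

Lemma cDE : evP cDS = - ((a (inord 0) * a (inord 1) - a (inord 3) * a (inord 4)) *
   (a (inord 0) * a (inord 1) * a (inord 4)) *
   (1 - 27 * a (inord 0) * a (inord 1) * a (inord 2) - 81 * a (inord 2) * a (inord 3) * a (inord 4))).
Proof.
rewrite /cDS !evP_mul /DIFS /NFS !evP_cons !evP_nil /zC.
vm_compute int_of_Z. rewrite /evE /=. ring.
Qed.
End Main.

Section Main2.
Variable C : numClosedFieldType.
Variable a : 'I_5 -> C.
Lemma G0_ev m : lpmul 1 (Fi a (inord 0)) (evLS a hL0) m = evLS a GL0 m.
Proof. exact: G_ev. Qed.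
Lemma G1_ev m : lpmul 1 (Fi a (inord 1)) (evLS a hL1) m = evLS a GL1 m.
Proof. exact: G_ev. Qed.
Lemma G2_ev m : lpmul 1 (Fi a (inord 2)) (evLS a hL2) m = evLS a GL2 m.
Proof. exact: G_ev. Qed.
Lemma G3_ev m : lpmul 1 (Fi a (inord 3)) (evLS a hL3) m = evLS a GL3 m.
Proof. exact: G_ev. Qed.
Lemma evLS_nil m : evLS a [::] m = 0.
Proof. by rewrite /Submission.evLS big_nil. Qed.
Lemma evE_c : evE a (1,1,0,1,0)%nat = a (inord 0) * a (inord 1) * a (inord 3).
Proof. rewrite /evE /= !expr0 !expr1; ring. Qed.
Lemma evP_Dc : evP a (mulP DpS [:: (1%Z, (1,1,0,1,0)%nat)]) = evP a DpS * (a (inord 0) * a (inord 1) * a (inord 3)).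
Proof. by rewrite evP_mul evP1 zC1 evE_c mul1r. Qed.
Lemma evP_mcD : evP a (mulP [:: ((-1)%Z, e0)] cDS) = - evP a cDS.
Proof. by rewrite evP_mul evP1 zCm1 evE0 mulr1 mulN1r. Qed.
Lemma evP_m1 : evP a [:: ((-1)%Z, e0)] = -1.
Proof. by rewrite evP1 zCm1 evE0 mulr1. Qed.
End Main2.

Unset Implicit Arguments.
Theorem mainTheorem6 (C : numClosedFieldType) (a : 'I_5 -> C)
    (Res : lpoly C -> C) :
  Delta_regular a -> EA a != 0 -> is_toric_residue a Res ->
  - Res (mono (1, 1, 1) (a (inord 0) * a (inord 1) * a (inord 3)))
    = Rnum a / EA a.
Proof.
move=> _ HE [Rext Rlin Rvan Rvol].
set c := a (inord 0) * a (inord 1) * a (inord 3).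
set mo := mono (1, 1, 1) c.
have ResD (g h : lpoly C) : inS 3 g -> inS 3 h -> Res (lpadd g h) = Res g + Res h.
  move=> Hg Hh; rewrite -[Res g]mul1r -Rlin //; apply: Rext => m.
  by rewrite /lpadd /lpscale mul1r.
have R0 : Res (lpzero C) = 0.
  have h := ResD _ _ (@inS_zero C 3) (@inS_zero C 3).
  have e : Res (lpadd (lpzero C) (lpzero C)) = Res (lpzero C).
    by apply: Rext => m; rewrite /lpadd /lpzero addr0.
  move: h; rewrite e => h; apply: (@addrI _ (Res (lpzero C))); by rewrite addr0 -h.
pose G k hL := lpmul 1 (Fi a (inord k)) (evLS a hL).
have G3 k hL : (k < 4)%nat -> suppIn (mulLS (thLS k fL) hL) S3L -> inS 3 (G k hL).
  by move=> hk hs; apply: (inS_ext (fun m => G_ev a hL m hk)); apply: inS_ev3.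
have GR k hL : suppIn hL S2L -> Res (G k hL) = 0.
  by move=> hs; apply: Rvan; apply: inS_ev2.
have I0 := G3 0%nat hL0 isT GL0_supp.
have I1 := G3 1%nat hL1 isT GL1_supp.
have I2 := G3 2%nat hL2 isT GL2_supp.
have I3 := G3 3%nat hL3 isT GL3_supp.
have IR : inS 3 (lpadd (G 0%nat hL0) (lpadd (G 1%nat hL1) (lpadd (G 2%nat hL2) (G 3%nat hL3)))).
  by apply: inS_add => //; apply: inS_add => //; apply: inS_add.
have RR : Res (lpadd (G 0%nat hL0) (lpadd (G 1%nat hL1) (lpadd (G 2%nat hL2) (G 3%nat hL3)))) = 0.
  rewrite ResD //; last by apply: inS_add => //; apply: inS_add.
  rewrite ResD //; last by apply: inS_add.
  rewrite ResD //.
  by rewrite !GR ?addr0 ?hL0_supp ?hL1_supp ?hL2_supp ?hL3_supp.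
have IH : inS 3 (Hprime a).
  by apply: (inS_ext (Hprime_ev a)); apply: inS_ev3; exact: HS_supp.
have Imo : inS 3 mo.
  move=> m; rewrite /mo /mono; case: (m =P (1, 1, 1)) => [-> _|_]; last by rewrite eqxx.
  exact: (inkD_S3 p111_S3).
have RT := Rlin (evP a cDS) _ _ IH IR.
rewrite RR Rvol addr0 in RT.
have RL := Rlin (evP a DpS) _ _ Imo (@inS_zero C 3).
rewrite R0 addr0 in RL.
have EQ : Res (lpadd (lpscale (evP a DpS) mo) (lpzero C)) =
          Res (lpadd (lpscale (evP a cDS) (Hprime a))
                 (lpadd (G 0%nat hL0) (lpadd (G 1%nat hL1) (lpadd (G 2%nat hL2) (G 3%nat hL3))))).
  apply: Rext => m.
  rewrite /lpadd /lpscale /lpzero /mo /mono (Hprime_ev a m) /G.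
  rewrite G0_ev G1_ev G2_ev G3_ev.
  have := evLS_zero a Tot_ok m.
  rewrite /Tot (evLS_cat a [:: _]) (evLS_cat a (scaleLS _ HS)) !evLS_scale evLS_seq1.
  rewrite (evLS_cat a GL0) (evLS_cat a GL1) (evLS_cat a GL2) evP_Dc evP_mcD evP_m1.
  case: (m == (1, 1, 1)) => H; apply/eqP; rewrite -subr_eq0; apply/eqP; rewrite -[RHS]H /c; ring.
rewrite RL RT DpE cDE in EQ.
set DIF := a (inord 0) * a (inord 1) - a (inord 3) * a (inord 4) in EQ.
set Qf := 1 - 54 * a (inord 2) * (a (inord 0) * a (inord 1) + a (inord 3) * a (inord 4))
   + 729 * a (inord 2) ^+ 2 * DIF ^+ 2 in EQ.
have HD : 6 * a (inord 4) * DIF ^+ 2 * Qf != 0.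
  apply: contra HE => /eqP H0.
  have : (6 : C) * EA a ^+ 2 = 0.
    rewrite (_ : 6 * EA a ^+ 2 = 6 * a (inord 4) * DIF ^+ 2 * Qf *
       (a (inord 0) ^+ 3 * a (inord 1) ^+ 3 * a (inord 2) ^+ 4 * a (inord 3) ^+ 3 * a (inord 4) ^+ 2) ^+ 2
        * a (inord 4) * Qf); first by rewrite H0 !mul0r.
    rewrite /EA /Qf /DIF /=; ring.
  by move/eqP; rewrite mulf_eq0 pnatr_eq0 /= expf_eq0.
have HRm : Res mo = - (DIF * (a (inord 0) * a (inord 1) * a (inord 4)) *
   (1 - 27 * a (inord 0) * a (inord 1) * a (inord 2) - 81 * a (inord 2) * a (inord 3) * a (inord 4)))
   * 6%:R / (6 * a (inord 4) * DIF ^+ 2 * Qf).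
  by rewrite -EQ mulrC mulKf.
rewrite HRm.
move: HE HD; rewrite /Rnum /EA /Qf /DIF /= => HE HD.
field.
apply/and4P; split.
- by apply: contra HE => /eqP h; apply/eqP; rewrite -h; ring.
- by apply: contra HD => /eqP h; apply/eqP; rewrite h; ring.
- by apply: contra HD => /eqP h; apply/eqP; rewrite h; ring.
- by apply: contra HD => /eqP h; apply/eqP; rewrite h; ring.
Qed.
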